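(* Let $T:\mathbb{Z}_{\ge 0}\to\mathbb{R}$ be given by $T(0)=0$ and $T(2n)=T(2n-1)=n$ for all $n\ge 1$. Then $T(mn) = T(m)T(n) + T(m-1)T(n-1)$ for all integers $m,n\ge 1$. *)

(* Defs.v *)
From Stdlib Require Import Reals Arith.
Open Scope R_scope.

Fixpoint T (k : nat) : R :=
  match k with
  | O => 0
  | S O => 1
  | S (S j) => T j + 1
  end.

(* Main.v *)
Require Import Defs.
From Stdlib Require Import Reals Arith Lra Lia.
Open Scope R_scope.

Definition P (k : nat) : R := if Nat.even k then 0 else 1.

Lemma T2 : forall k, 2 * T k = INR k + P k /\ 2 * T (S k) = INR (S k) + P (S k).
Proof.
  induction k as [|k [IH1 IH2]].
  - unfold P; simpl; split; lra.
  - split; [exact IH2|].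
    change (T (S (S k))) with (T k + 1).
    unfold P in *. rewrite !S_INR in *.
    change (Nat.even (S (S k))) with (Nat.even k).
    lra.
Qed.

Lemma Tk k : T k = (INR k + P k) / 2.
Proof. destruct (T2 k) as [H _]. lra. Qed.

Lemma Tpred m : (1 <= m)%nat -> T (m - 1) = (INR m - P m) / 2.
Proof.
  intros H. destruct m as [|m]; [lia|].
  replace (S m - 1)%nat with m by lia.
  rewrite Tk. unfold P. rewrite S_INR.
  rewrite Nat.even_succ, <- Nat.negb_even.
  destruct (Nat.even m); simpl; lra.
Qed.

Theorem lemma3 (m n : nat) (hm : (1 <= m)%nat) (hn : (1 <= n)%nat) :
  T (m * n) = T m * T n + T (m - 1) * T (n - 1).
Proof.
  rewrite (Tpred m hm), (Tpred n hn), !Tk, mult_INR.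
  unfold P. rewrite Nat.even_mul.
  destruct (Nat.even m), (Nat.even n); simpl; field.
Qed.
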